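(* Let $G=(V,E)$ be a connected comparability graph. Then the acyclic orientations of $E$ whose induced posets have the maximum number of linear extensions (among all acyclic orientations of $E$) are exactly the transitive orientations of $G$.
   Context: A comparability graph is a simple undirected graph $G=(V,E)$ for which there is a partial order on $V$ under which two distinct vertices $u,v$ are comparable if and only if $\{u,v\}\in E$. An acyclic orientation of $E$ induces a partial order on $V$ in which $u<v$ if and only if there is a directed path from $u$ to $v$. An acyclic orientation $O$ of $E$ is a transitive orientation of $G$ if the comparability graph of the poset induced by $O$ equals $G$ (i.e. two distinct vertices are comparable in the induced poset iff they are adjacent in $G$). A linear extension of a partial order $P$ on an $n$-element set $V$ is a bijection $\sigma:V\to[n]$ such that $u<_P v$ implies $\sigma(u)<\sigma(v)$. *)

(* Defs.v *)
From mathcomp Require Import all_boot.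
Set Implicit Arguments. Unset Strict Implicit. Unset Printing Implicit Defensive.

Section Defs.
Variable V : finType.

Definition simple_graph (e : rel V) : Prop :=
  symmetric e /\ irreflexive e.

Definition connected (e : rel V) : Prop := forall u v, connect e u v.

Definition strict_porder (lt : rel V) : Prop :=
  irreflexive lt /\ transitive lt.

Definition comparability_of (lt : rel V) (e : rel V) : Prop :=
  forall u v, u != v -> (lt u v || lt v u) = e u v.

Definition comparability_graph (e : rel V) : Prop :=
  exists lt : rel V, strict_porder lt /\ comparability_of lt e.

Definition orientation (e : rel V) (O : rel V) : Prop :=
  (forall u v, O u v -> e u v) /\ (forall u v, e u v -> O u v != O v u).

Definition acyclic (O : rel V) : Prop :=
  forall u v, O u v -> ~~ connect O v u.

Definition acyclic_orientation (e O : rel V) : Prop :=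
  orientation e O /\ acyclic O.

Definition induced_lt (O : rel V) : rel V :=
  fun u v => (u != v) && connect O u v.

Definition transitive_orientation (e O : rel V) : Prop :=
  acyclic_orientation e O /\ comparability_of (induced_lt O) e.

Definition is_linext (lt : rel V) (s : {ffun V -> 'I_#|V|}) : bool :=
  injectiveb s && [forall u, forall v, lt u v ==> (s u < s v)].

Definition num_linext (lt : rel V) : nat := #|[pred s | is_linext lt s]|.

End Defs.

(* Main.v *)
From mathcomp Require Import all_boot zify.
Require Import Defs.
Set Implicit Arguments. Unset Strict Implicit. Unset Printing Implicit Defensive.

Section Lin.
Variable V : finType.
Implicit Types (A S : {set V}) (R : rel V).

Definition maxs R A := [set v in A | [forall u in A, ~~ R v u]].

Fixpoint linf R n A : nat :=
  if n is n'.+1 then \sum_(v in maxs R A) linf R n' (A :\ v) else 1.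
Definition lin R A := linf R #|A| A.

Lemma lin0 R : lin R set0 = 1.
Proof. by rewrite /lin cards0. Qed.

Lemma linS R A : A != set0 -> lin R A = \sum_(v in maxs R A) lin R (A :\ v).
Proof.
move=> nz; rewrite /lin.
have : 0 < #|A| by rewrite card_gt0.
case Ec: #|A| => [|n] // _ /=.
apply: eq_bigr => v; rewrite inE => /andP[vA _].
by rewrite (cardsD1 v A) vA add1n in Ec; case: Ec => ->.
Qed.

Lemma maxs_sub R A : maxs R A \subset A.
Proof. by apply/subsetP => v; rewrite inE => /andP[]. Qed.

Lemma exists_max R A : irreflexive R -> transitive R -> A != set0 ->
  exists v, v \in maxs R A.
Proof.
move=> Ri Rt /set0Pn[a aA].
pose d v := #|[set u in A | R u v]|.
case: (@arg_maxnP _ a (mem A) d aA) => v vA0 vmax.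
have vA : v \in A by exact: vA0.
exists v; rewrite inE; apply/andP; split => //; apply/forallP => w; apply/implyP => wA.
apply/negP => Rvw.
have := vmax w wA.
have sub : v |: [set u in A | R u v] \subset [set u in A | R u w].
  apply/subsetP => u; rewrite !inE => /orP[/eqP->|/andP[uA Ruv]].
    by rewrite vA.
  by rewrite uA (Rt _ _ _ Ruv Rvw).
have := subset_leq_card sub.
rewrite cardsU1 inE Ri andbF /= => h1 h2.
by have := leq_trans h1 h2; rewrite /d ltnn.
Qed.

Lemma lin_gt0 R A : irreflexive R -> transitive R -> 0 < lin R A.
Proof.
move=> Ri Rt; move: {2}#|A| (leqnn #|A|) => n; elim: n A => [|n IH] A hA.
  by move: hA; rewrite leqn0 cards_eq0 => /eqP->; rewrite lin0.
case: (eqVneq A set0) => [->|nz]; first by rewrite lin0.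
rewrite linS //; have [v vm] := exists_max Ri Rt nz.
rewrite (bigD1 v) //=; apply: ltn_addr; apply: IH.
have vA : v \in A by move: vm; rewrite inE => /andP[].
by move: hA; rewrite (cardsD1 v A) vA.
Qed.


Lemma sumU (A B : {set V}) (F : V -> nat) : [disjoint A & B] ->
  \sum_(i in A :|: B) F i = \sum_(i in A) F i + \sum_(i in B) F i.
Proof. by move=> d; rewrite -bigU //; apply: eq_bigl => x; rewrite inE. Qed.

Lemma setDDC A v m : A :\ v :\ m = A :\ m :\ v.
Proof. by apply/setP => x; rewrite !inE andbCA. Qed.

Definition Nb R A m := [set x in A | R x m & [forall u in A, R x u ==> (u == m)]].

Section Poset.
Variable T : rel V.
Hypothesis Ti : irreflexive T.
Hypothesis Tt : transitive T.

Lemma maxsD A v : v \in A -> maxs T (A :\ v) = (maxs T A :\ v) :|: Nb T A v.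
Proof.
move=> vA; apply/setP => m; rewrite !inE; apply/idP/idP.
  case/andP => /andP[mv mA] /forallP H.
  case Tmv: (T m v).
    apply/orP; right; rewrite mA /=; apply/forallP => u; apply/implyP => uA.
    apply/implyP => Tmu; apply/negPn/negP => uv.
    by have := H u; rewrite !inE uv uA Tmu.
  apply/orP; left; rewrite mv mA /=; apply/forallP => u; apply/implyP => uA.
  case: (eqVneq u v) => [->|uv]; first by rewrite Tmv.
  by have := H u; rewrite !inE uv uA.
case/orP.
  case/andP => mv /andP[mA /forallP H]; rewrite mv mA /=.
  apply/forallP => u; apply/implyP; rewrite !inE => /andP[_ uA].
  by have := H u; rewrite uA.
case/andP => mA /andP[Tmv /forallP H].
have mv : m != v by apply/negP => /eqP E; move: Tmv; rewrite E Ti.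
rewrite mv mA /=; apply/forallP => u; apply/implyP; rewrite !inE => /andP[uv uA].
apply/negP => Tmu; have := H u; rewrite uA Tmu /= => /eqP E.
by move: uv; rewrite E eqxx.
Qed.

Lemma Nb_disj A v : v \in A -> [disjoint maxs T A :\ v & Nb T A v].
Proof.
move=> vA; rewrite -setI_eq0; apply/eqP/setP => x; rewrite !inE.
apply/negP => /andP[/andP[_ /andP[_ /forallP H]] /andP[_ /andP[Txv _]]].
by have := H v; rewrite vA Txv.
Qed.

Lemma Nb_max A v : v \notin maxs T A -> v \in A -> Nb T A v = set0.
Proof.
move=> nm vA; apply/setP => x; rewrite !inE; apply/negP.
case/andP => xA /andP[Txv /forallP H].
case/negP: nm; rewrite inE vA /=; apply/forallP => u.
apply/implyP => uA; apply/negP => Tvu.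
have := H u; rewrite uA (Tt Txv Tvu) /= => /eqP E.
by move: Tvu; rewrite E Ti.
Qed.


Lemma antichain_sum A S : S \subset A ->
  (forall u w, u \in S -> w \in S -> ~~ T u w) ->
  \sum_(v in S) lin T (A :\ v) <= lin T A.
Proof.
move: {2}#|A| (leqnn #|A|) => n; elim: n A S => [|n IH] A S hA sSA acS.
  have A0 : A = set0 by apply/eqP; rewrite -cards_eq0 -leqn0.
  have S0 : S = set0 by apply/eqP; rewrite -subset0 -A0.
  by rewrite S0 big_set0.
have hS : forall v, v \in S -> v \in A := fun v vS => subsetP sSA v vS.
case: (leqP #|A| 1) => hA1.
  rewrite (eq_bigr (fun _ => 1)); last first.
    move=> v vS; have vA := hS v vS.
    have : #|A :\ v| == 0 by have := cardsD1 v A; rewrite vA; lia.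
    by rewrite cards_eq0 => /eqP->; rewrite lin0.
  rewrite sum1_card; apply: leq_trans (subset_leq_card sSA) _.
  apply: leq_trans hA1 _; exact: lin_gt0.
pose h v m := lin T (A :\ v :\ m).
have E1 : \sum_(v in S) lin T (A :\ v) =
   \sum_(v in S) \sum_(m in maxs T A | m != v) h v m
   + \sum_(v in S | v \in maxs T A) \sum_(m in Nb T A v) h v m.
  rewrite [X in _ = _ + X]big_mkcondr /= -big_split /=; apply: eq_bigr => v vS.
  have vA := hS v vS.
  have nz : A :\ v != set0 by rewrite -card_gt0; have := cardsD1 v A; rewrite vA; lia.
  rewrite linS // maxsD // sumU ?Nb_disj //.
  congr (_ + _).
    by apply: eq_bigl => m; rewrite in_setD1 andbC.
  case: ifP => // vm; by rewrite Nb_max ?vm // big_set0.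
have E2 : \sum_(v in S) \sum_(m in maxs T A | m != v) h v m =
          \sum_(m in maxs T A) \sum_(w in S | w != m) h m w.
  transitivity (\sum_(v in S) \sum_(m in maxs T A) (if m != v then h v m else 0)).
    by apply: eq_bigr => v _; rewrite big_mkcondr.
  rewrite exchange_big /=; apply: eq_bigr => m _; rewrite big_mkcondr; apply: eq_bigr => w _.
  by rewrite eq_sym /h setDDC.
have E3 : \sum_(v in S | v \in maxs T A) \sum_(m in Nb T A v) h v m =
          \sum_(m in maxs T A) (if m \in S then \sum_(w in Nb T A m) h m w else 0).
  by rewrite -big_mkcondr; apply: eq_bigl => m; rewrite andbC.
rewrite E1 E2 E3 -big_split /= [lin T A]linS; last by rewrite -card_gt0; lia.
apply: leq_sum => m mm.
have mA : m \in A by move: mm; rewrite inE => /andP[].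
have hA' : #|A :\ m| <= n by have := cardsD1 m A; rewrite mA; lia.
case mS: (m \in S); last first.
  rewrite addn0; have := IH (A :\ m) (S :\ m) hA'.
  rewrite (eq_bigl (fun w => (w \in S) && (w != m))); last by move=> w; rewrite in_setD1 andbC.
  apply.
    by apply/subsetP => x; rewrite !in_setD1 => /andP[-> /hS].
  by move=> u w; rewrite !in_setD1 => /andP[_ uS] /andP[_ wS]; apply: acS.
have dis : [disjoint S :\ m & Nb T A m].
  rewrite -setI_eq0; apply/eqP/setP => x; rewrite !inE; apply/negP.
  case/andP => /andP[_ xS] /andP[_ /andP[Txm _]].
  by have := acS x m xS mS; rewrite Txm.
have := IH (A :\ m) ((S :\ m) :|: Nb T A m) hA'.
rewrite sumU //.
have -> : \sum_(w in S :\ m) lin T (A :\ m :\ w) = \sum_(w in S | w != m) lin T (A :\ m :\ w).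
  by apply: eq_bigl => w; rewrite in_setD1 andbC.
apply.
  apply/subsetP => x; rewrite in_setU => /orP[|].
    by rewrite !in_setD1 => /andP[-> /hS].
  rewrite !inE => /andP[xA /andP[Txm _]]; rewrite xA andbT.
  by apply/negP => /eqP E; move: Txm; rewrite E Ti.
move=> u w; rewrite !in_setU.
have NbE : forall x, x \in Nb T A m -> [/\ x \in A, T x m & forall y, y \in A -> T x y -> y = m].
  move=> x; rewrite inE => /andP[xA /andP[Txm /forallP H]]; split => // y yA Txy.
  by have := H y; rewrite yA Txy => /eqP.
case/orP => [uS|/NbE[uA Tum Hu]]; case/orP => [wS|/NbE[wA Twm Hw]].
- by move: uS wS; rewrite !in_setD1 => /andP[_ uS] /andP[_ wS]; apply: acS.
- apply/negP => Tuw; move: uS; rewrite in_setD1 => /andP[_ uS].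
  by have := acS u m uS mS; rewrite (Tt Tuw Twm).
- apply/negP => Tuw; move: wS; rewrite in_setD1 => /andP[wm wS].
  by move: wm; rewrite (Hu w (hS w wS) Tuw) eqxx.
- apply/negP => Tuw; have E := Hu w wA Tuw.
  by move: Twm; rewrite E Ti.
Qed.

End Poset.

Section Main.
Variables (e X T : rel V).
Hypothesis esym : symmetric e.
Hypothesis HX : forall u v, e u v -> X u v || X v u.
Hypothesis Ti : irreflexive T.
Hypothesis Tt : transitive T.
Hypothesis HTe : forall u v, T u v -> e u v.

Lemma sinks_ac A u w : u \in maxs X A -> w \in maxs X A -> ~~ T u w.
Proof.
rewrite !inE => /andP[uA /forallP Hu] /andP[wA /forallP Hw]; apply/negP => Tuw.
have := HX (HTe Tuw); have := Hu w; have := Hw u.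
by rewrite uA wA /= => /negbTE-> /negbTE->.
Qed.

Lemma MC1 A : lin X A <= lin T A.
Proof.
move: {2}#|A| (leqnn #|A|) => n; elim: n A => [|n IH] A hA.
  have A0 : A = set0 by apply/eqP; rewrite -cards_eq0 -leqn0.
  by rewrite A0 !lin0.
case: (eqVneq A set0) => [->|nz]; first by rewrite !lin0.
rewrite linS //; apply: leq_trans (antichain_sum Ti Tt (maxs_sub X A) (@sinks_ac A)).
apply: leq_sum => v; rewrite inE => /andP[vA _]; apply: IH.
by have := cardsD1 v A; rewrite vA; lia.
Qed.

Lemma MC2 A a b c : (forall u v, X u v -> ~~ X v u) ->
  a \in A -> b \in A -> c \in A -> X a b -> X b c -> ~~ e a c ->
  lin X A < lin T A.
Proof.
move=> HXas; move: {2}#|A| (leqnn #|A|) => n; elim: n A => [|n IH] A hA aA bA cA Xab Xbc eac.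
  by move: hA; rewrite leqn0 cards_eq0 => /eqP A0; move: aA; rewrite A0 inE.
have nz : A != set0 by apply/set0Pn; exists a.
have notmax : forall x y, x \in A -> y \in A -> X x y -> x \notin maxs X A.
  move=> x y xA yA Xxy; rewrite inE xA /=; apply/negP => /forallP H.
  by have := H y; rewrite yA Xxy.
case: (boolP [exists v in maxs X A, v != c]).
  case/exists_inP => v vm vc.
  have vA : v \in A by move: vm; rewrite inE => /andP[].
  have va : v != a by apply/negP => /eqP E; move: vm; rewrite E (negbTE (notmax _ _ aA bA Xab)).
  have vb : v != b by apply/negP => /eqP E; move: vm; rewrite E (negbTE (notmax _ _ bA cA Xbc)).
  have hA' : #|A :\ v| <= n by have := cardsD1 v A; rewrite vA; lia.
  have := IH (A :\ v) hA'.
  rewrite !in_setD1 aA bA cA eq_sym va eq_sym vb eq_sym vc => /(_ isT isT isT Xab Xbc eac) H.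
  rewrite linS //; apply: leq_trans (antichain_sum Ti Tt (maxs_sub X A) (@sinks_ac A)).
  rewrite (bigD1 v vm) [Y in _ <= Y](bigD1 v vm) /=.
  have : \sum_(i in maxs X A | i != v) lin X (A :\ i) <= \sum_(i in maxs X A | i != v) lin T (A :\ i).
    apply: leq_sum => i /andP[]; rewrite inE => /andP[iA _] _; apply: MC1.
  by move=> Hs; rewrite -addSn; apply: leq_add.
rewrite negb_exists_in => /forall_inP Hc.
have ac : a != c by apply/negP => /eqP E; move: Xbc; rewrite -E (negbTE (HXas _ _ Xab)).
have le1 : lin X A <= lin X (A :\ c).
  rewrite linS //; apply: (@leq_trans (\sum_(v in maxs X A) (if v == c then lin X (A :\ c) else 0))).
    by apply: leq_sum => v vm; have := Hc v vm; rewrite negbK => /eqP->; rewrite eqxx.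
  rewrite -big_mkcondr; case: (boolP (c \in maxs X A)) => cm.
    by rewrite (big_pred1 c) // => v; rewrite /= andbC; case: eqP => // ->.
  by rewrite big_pred0 // => v; apply/negP => /andP[vm /eqP E]; move: vm; rewrite E (negbTE cm).
have le2 := MC1 (A :\ c).
have S2 : [set a; c] \subset A by apply/subsetP => x; rewrite !inE => /orP[]/eqP->.
have acS : forall u w, u \in [set a; c] -> w \in [set a; c] -> ~~ T u w.
  move=> u w; rewrite !inE => /orP[]/eqP-> /orP[]/eqP->; rewrite ?Ti //.
    by apply/negP => /HTe; rewrite (negbTE eac).
  by apply/negP => /HTe; rewrite esym (negbTE eac).
have := antichain_sum Ti Tt S2 acS.
rewrite big_setU1 ?inE //= big_set1.
have := lin_gt0 (A :\ a) Ti Tt.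
lia.
Qed.

End Main.


Section Bridge.
Variable R : rel V.
Hypothesis Ri : irreflexive R.

Definition goodA A (s : {ffun V -> 'I_#|V|}) : bool :=
 [&& [forall x, (x \notin A) ==> (s x == enum_rank x)],
     [forall x in A, s x < #|A|],
     [forall x in A, forall y in A, (s x == s y) ==> (x == y)] &
     [forall x in A, forall y in A, R x y ==> (s x < s y)]].

Lemma goodP A (s : {ffun V -> 'I_#|V|}) : reflect
  [/\ forall x, x \notin A -> s x = enum_rank x,
      forall x, x \in A -> s x < #|A|,
      {in A &, injective s} &
      forall x y, x \in A -> y \in A -> R x y -> s x < s y] (goodA A s).
Proof.
apply: (iffP idP).
  case/and4P => /forallP H1 /forall_inP H2 /forall_inP H3 /forall_inP H4; split.
  - by move=> x xA; apply/eqP; have := H1 x; rewrite xA.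
  - exact: H2.
  - by move=> x y xA yA sxy; apply/eqP; have /forall_inP/(_ y yA) := H3 x xA; rewrite sxy eqxx.
  - by move=> x y xA yA Rxy; have /forall_inP/(_ y yA) := H4 x xA; rewrite Rxy.
case=> H1 H2 H3 H4; apply/and4P; split.
- by apply/forallP => x; apply/implyP => xA; rewrite H1.
- by apply/forall_inP.
- by apply/forall_inP => x xA; apply/forall_inP => y yA; apply/implyP => /eqP/H3 ->.
- by apply/forall_inP => x xA; apply/forall_inP => y yA; apply/implyP => /H4; apply.
Qed.

Definition GA A := #|[set s | goodA A s]|.

Lemma GA0 : GA set0 = 1.
Proof.
rewrite /GA (_ : [set s | goodA set0 s] = [set [ffun x => enum_rank x]]) ?cards1 //.
apply/setP => s; rewrite !inE; apply/goodP/eqP.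
  by case=> H1 _ _ _; apply/ffunP => x; rewrite ffunE H1 ?inE.
by move=> ->; split=> [x _|x|x y|x y]; rewrite ?ffunE ?inE.
Qed.

Lemma card_lt_ord k (hk : k <= #|V|) : #|[set i : 'I_#|V| | i < k]| = k.
Proof.
rewrite (_ : [set i : 'I_#|V| | i < k] = [set widen_ord hk j | j : 'I_k]).
  by rewrite card_imset ?card_ord //; by move=> i j /(congr1 val) /= E; apply: val_inj.
apply/setP => i; rewrite !inE; apply/idP/imsetP.
  by move=> ik; exists (Ordinal ik) => //; apply: val_inj.
by case=> j _ ->; rewrite /= ltn_ord.
Qed.

Definition upd (v : V) (y : 'I_#|V|) (s : {ffun V -> 'I_#|V|}) :=
  [ffun x => if x == v then y else s x].

Lemma GAS A : A != set0 -> GA A = \sum_(v in maxs R A) GA (A :\ v).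
Proof.
move=> nz.
have kA : #|A|.-1 < #|V|.
  have := max_card A; have := card_gt0 A; rewrite nz; lia.
pose K := Ordinal kA.
(* pigeonhole *)
have pig : forall s, goodA A s -> exists2 w, w \in A & s w = K.
  move=> s /goodP[H1 H2 H3 H4].
  case: (boolP [exists w in A, s w == K]).
    by case/exists_inP => w wA /eqP E; exists w.
  rewrite negb_exists_in => /forall_inP HK.
  have sub : [set s x | x in A] \subset [set i : 'I_#|V| | i < #|A|.-1].
    apply/subsetP => i /imsetP[x xA ->]; rewrite inE.
    have sK : s x != K := HK x xA.
    have : (s x : nat) != #|A|.-1 by apply/eqP => E; move/eqP: sK; apply; apply: ord_inj.
    have := H2 x xA; lia.
  have := subset_leq_card sub; rewrite card_in_imset // card_lt_ord; last by lia.
  have := card_gt0 A; rewrite nz; lia.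
have maxw : forall s w, goodA A s -> w \in A -> s w = K -> w \in maxs R A.
  move=> s w /goodP[H1 H2 H3 H4] wA swK; rewrite inE wA /=.
  apply/forall_inP => y yA; apply/negP => Rwy.
  have := H4 w y wA yA Rwy; have := H2 y yA; rewrite swK /=.
  have := card_gt0 A; rewrite nz; lia.
have one : forall s, goodA A s -> \sum_(v in maxs R A) (s v == K) = 1.
  move=> s gs; have [w wA swK] := pig s gs.
  rewrite (bigD1 w) ?(maxw s w) //= swK eqxx big1 // => v /andP[vm vw].
  have vA : v \in A by move: vm; rewrite inE => /andP[].
  case: eqP => // svK; case/goodP: gs => _ _ H3 _.
  by move: vw; rewrite (H3 v w vA wA) ?eqxx // svK swK.
rewrite /GA -sum1_card.
rewrite (eq_bigr (fun s : {ffun V -> 'I_#|V|} => \sum_(v in maxs R A) (s v == K))); last first.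
  by move=> s; rewrite inE => /one.
rewrite exchange_big /=; apply: eq_bigr => v vm.
have vA : v \in A by move: vm; rewrite inE => /andP[].
rewrite -big_mkcondr /= sum1_card.
have -> : [set s | goodA (A :\ v) s] = upd v (enum_rank v) @: [set s | goodA A s & s v == K].
  apply/setP => s'; rewrite inE; apply/idP/imsetP.
    move/goodP => [H1 H2 H3 H4].
    exists (upd v K s').
      rewrite inE ffunE eqxx; apply/andP; split => //; apply/goodP; split.
      - move=> x xA; rewrite ffunE; case: eqP => [E|_]; first by move: xA; rewrite E vA.
        by rewrite H1 // in_setD1 (negbTE xA) andbF.
      - move=> x xA; rewrite ffunE; case: eqP => [_|/eqP xv] /=.
          by have := card_gt0 A; rewrite nz; lia.
        have xA' : x \in A :\ v by rewrite in_setD1 xv.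
        have := H2 x xA'; have := cardsD1 v A; rewrite vA add1n => -> H; rewrite ltnS; exact: ltnW H.
      - move=> x y xA yA; rewrite !ffunE.
        case: eqP => [->|/eqP xv]; case: eqP => [->|/eqP yv] // E.
        + have yA' : y \in A :\ v by rewrite in_setD1 yv.
          have := H2 y yA'; rewrite -E /=; have := cardsD1 v A; rewrite vA; lia.
        + have xA' : x \in A :\ v by rewrite in_setD1 xv.
          have := H2 x xA'; rewrite E /=; have := cardsD1 v A; rewrite vA; lia.
        + by apply: H3; rewrite // in_setD1 ?xv ?yv.
      - move=> x y xA yA Rxy; rewrite !ffunE.
        case: eqP => [E|/eqP xv].
          move: vm; rewrite inE => /andP[_ /forall_inP/(_ y yA)].
          by rewrite -E Rxy.
        case: eqP => [E|/eqP yv].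
          have xA' : x \in A :\ v by rewrite in_setD1 xv.
          have := H2 x xA'; have := cardsD1 v A; rewrite vA /=; lia.
        by apply: H4; rewrite // in_setD1 ?xv ?yv.
    apply/ffunP => x; rewrite !ffunE; case: eqP => [->|//].
    by rewrite H1 // in_setD1 eqxx.
  case=> s; rewrite inE => /andP[/goodP[H1 H2 H3 H4] /eqP svK] ->.
  apply/goodP; split.
  - move=> x; rewrite in_setD1 ffunE negb_and negbK; case: eqP => [->|_ /= xA] //.
    by rewrite H1.
  - move=> x; rewrite in_setD1 ffunE => /andP[xv xA]; rewrite (negbTE xv).
    have sK : (s x : nat) != #|A|.-1.
      apply/eqP => E; move/eqP: xv; apply; apply: H3 => //.
      by apply: ord_inj; rewrite svK /= E.
    move: (H2 x xA) sK; rewrite (cardsD1 v A) vA add1n /=; lia.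
  - move=> x y; rewrite !in_setD1 !ffunE => /andP[xv xA] /andP[yv yA].
    by rewrite (negbTE xv) (negbTE yv); exact: H3.
  - move=> x y; rewrite !in_setD1 !ffunE => /andP[xv xA] /andP[yv yA].
    by rewrite (negbTE xv) (negbTE yv); exact: H4.
rewrite card_in_imset; first by apply: eq_card => s; rewrite [RHS]inE unfold_in /= inE.
move=> s1 s2; rewrite !inE => /andP[_ /eqP s1K] /andP[_ /eqP s2K] E.
apply/ffunP => x; case: (eqVneq x v) => [->|xv]; first by rewrite s1K s2K.
by move/ffunP: E => /(_ x); rewrite !ffunE (negbTE xv).
Qed.

Lemma GA_lin A : GA A = lin R A.
Proof.
move: {2}#|A| (leqnn #|A|) => n; elim: n A => [|n IH] A hA.
  have A0 : A = set0 by apply/eqP; rewrite -cards_eq0 -leqn0.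
  by rewrite A0 GA0 lin0.
case: (eqVneq A set0) => [->|nz]; first by rewrite GA0 lin0.
rewrite GAS // linS //; apply: eq_bigr => v; rewrite inE => /andP[vA _].
by apply: IH; have := cardsD1 v A; rewrite vA; lia.
Qed.

Lemma path_lt (s : {ffun V -> 'I_#|V|}) :
  (forall x y, R x y -> s x < s y) ->
  forall p u, path R u p -> p != [::] -> s u < s (last u p).
Proof.
move=> hs; elim=> [|x p IH] u //= /andP[Rux pp] _.
case: p IH pp => [|y p] IH pp /=; first exact: hs.
exact: ltn_trans (hs _ _ Rux) (IH x pp isT).
Qed.

Lemma num_lin : num_linext (induced_lt R) = lin R setT.
Proof.
rewrite -GA_lin /num_linext /GA; apply: eq_card => s; rewrite [RHS]inE unfold_in /=.
apply/idP/goodP.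
  case/andP => /injectiveP inj /forallP H; split.
  - by move=> x; rewrite inE.
  - by move=> x _; rewrite cardsT ltn_ord.
  - by move=> x y _ _; apply: inj.
  - move=> x y _ _ Rxy; have /forallP/(_ y) := H x; rewrite /induced_lt connect1 // andbT.
    have -> : x != y by apply/negP => /eqP E; move: Rxy; rewrite E Ri.
    by [].
case=> _ _ H3 H4; apply/andP; split.
  by apply/injectiveP => x y; apply: H3; rewrite inE.
apply/forallP => u; apply/forallP => v; apply/implyP; rewrite /induced_lt.
case/andP => uv /connectP[p pp vE].
have hs : forall x y, R x y -> s x < s y by move=> x y; apply: H4; rewrite inE.
rewrite vE; apply: path_lt => //; apply/negP => /eqP p0.
by move: uv; rewrite vE p0 eqxx.
Qed.

End Bridge.

End Lin.

Lemma conn_trans_rel (V : finType) (r : rel V) : transitive r ->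
  forall x y, connect r x y -> (x == y) || r x y.
Proof.
move=> rt x y /connectP[p pp ->]; elim: p x pp => [|z p IH] x /=; first by rewrite eqxx.
case/andP => rxz pz; case/orP: (IH z pz) => [/eqP <-|h]; first by rewrite rxz orbT.
by rewrite (rt _ _ _ rxz h) orbT.
Qed.

Lemma triple (V : finType) (e O : rel V) :
  (forall u v, O u v -> e u v) -> (forall u v, e u v -> O u v || O v u) -> acyclic O ->
  forall p u, path O u p -> p != [::] -> ~~ e u (last u p) ->
  exists a b c, [/\ O a b, O b c & ~~ e a c].
Proof.
move=> Oe HX Oac; elim=> [|x p IH] u // pp _.
move: pp => /= /andP[Oux pp]; case: p IH pp => [|y p] IH pp /=.
  by rewrite Oe.
move=> nE; case: (boolP (e u y)) => euy; last first.
  by exists u, x, y; split => //; case/andP: pp.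
have Ouy : O u y.
  case/orP: (HX _ _ euy) => // Oyu.
  have := Oac _ _ Oyu; case/andP: pp => Oxy _.
  by rewrite (connect_trans (connect1 Oux) (connect1 Oxy)).
apply: (IH u) => //=; rewrite Ouy /=; by case/andP: pp.
Qed.

Unset Implicit Arguments.

Theorem theorem3p5 (V : finType) (e : rel V) :
  simple_graph e -> connected e -> comparability_graph e ->
  forall O : rel V, acyclic_orientation e O ->
    ((forall O' : rel V, acyclic_orientation e O' ->
        num_linext (induced_lt O') <= num_linext (induced_lt O))
     <-> transitive_orientation e O).
Proof.
move=> [esym eirr] _ [lt [[lti ltt] ltc]] O [[Oe Oor] Oac].
have HXgen : forall X : rel V, (forall u v, e u v -> X u v != X v u) ->
    forall u v, e u v -> X u v || X v u.
  by move=> X H u v /H; case: (X u v); case: (X v u).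
have HXO := HXgen O Oor.
have Oas : forall u v, O u v -> ~~ O v u.
  by move=> u v Ouv; have := Oor u v (Oe u v Ouv); rewrite Ouv.
have lte : forall u v, lt u v -> e u v.
  move=> u v luv; have uv : u != v by apply/negP => /eqP E; move: luv; rewrite E lti.
  by rewrite -(ltc u v uv) luv.
have elt : forall u v, e u v -> lt u v || lt v u.
  move=> u v euv; have uv : u != v by apply/negP => /eqP E; move: euv; rewrite E eirr.
  by rewrite (ltc u v uv).
have ltAO : acyclic_orientation e lt.
  split; first split => // u v /elt.
    by case luv: (lt u v); case lvu: (lt v u) => //= _; move: (ltt _ _ _ luv lvu); rewrite lti.
  move=> u v luv; apply/negP => /(conn_trans_rel ltt) /orP[/eqP E|lvu].
    by move: luv; rewrite E lti.
  by move: (ltt _ _ _ luv lvu); rewrite lti.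
have numO' : forall O', acyclic_orientation e O' -> num_linext (induced_lt O') = lin O' setT.
  by move=> O' [[O'e _] _]; apply: num_lin => u; apply/negP => /O'e; rewrite eirr.
have HO : acyclic_orientation e O by [].
split.
- move=> Hmax; split => // u v uv.
  have Hle := Hmax lt ltAO; rewrite !numO' // in Hle.
  have claim : forall x y, x != y -> ~~ e x y -> ~~ connect O x y.
    move=> x y xy nexy; apply/negP => /connectP[p pp yE].
    have pn : p != [::] by apply/negP => /eqP p0; move: xy; rewrite yE p0 eqxx.
    have nl : ~~ e x (last x p) by rewrite -yE.
    have [a [b [c [Oab Obc nac]]]] := triple Oe HXO Oac pp pn nl.
    have := MC2 esym HXO lti ltt lte (A:=setT) Oas (in_setT a) (in_setT b) (in_setT c) Oab Obc nac.
    by rewrite ltnNge Hle.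
  case euv: (e u v).
    rewrite /induced_lt /=; case/orP: (HXO u v euv) => h.
      by rewrite uv connect1.
    by apply/orP; right; rewrite eq_sym uv connect1.
  rewrite /induced_lt /= (negbTE (claim u v uv _)) ?euv //.
  rewrite (negbTE (claim v u _ _)) ?andbF //; first by rewrite eq_sym.
  by rewrite esym euv.
- move=> [_ Ocomp] O' HO'.
  have Ot : transitive O.
    move=> y x z Oxy Oyz.
    have xz : x != z by apply/negP => /eqP E; move: Oyz; rewrite -E (negbTE (Oas _ _ Oxy)).
    have : e x z by rewrite -(Ocomp x z xz) /induced_lt xz (connect_trans (connect1 Oxy) (connect1 Oyz)).
    case/HXO/orP => // Ozx.
    by have := Oac _ _ Ozx; rewrite (connect_trans (connect1 Oxy) (connect1 Oyz)).
  have Oirr : irreflexive O by move=> u; apply/negP => /Oe; rewrite eirr.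
  rewrite !numO' //.
  case: HO' => [[O'e O'or] _].
  exact: leq_trans (MC1 (HXgen O' O'or) lti ltt lte setT) (MC1 elt Oirr Ot Oe setT).
Qed.
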